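(* Let $k$, $n$, $r$ be nonnegative integers and let $X$ be the set of labeled lattice sequences of type $(k,n,r)$. For $(\lambda,L)\in X$ with $\lambda$ of shape $\alpha$, assign the weight $\mathrm{wt}((\lambda,L))=\mathrm{sign}(\lambda) = (-1)^{|\alpha|-\ell(\alpha)}$. Then \[\sum_{(\lambda,L)\in X}\mathrm{wt}((\lambda,L))=\sum_{i=0}^k\binom{(r+1)i+n}{i}.\]
   Context: A composition $\alpha=(\alpha_1,\dots,\alpha_j)$ of $m\ge 0$ is a finite sequence of positive integers summing to $m$ (the empty composition $()$ is the composition of $0$); $|\alpha|$ is the sum of the parts, $\ell(\alpha)$ the number of parts. For $r\ge 0$, $c(m,r)$ is the set of compositions of $m$ with all parts in $\{2,\dots,r+1\}$, and $\mathcal{C}(k,r)=\bigcup_{m=0}^k c(m,r)$. A labeled tableau of shape $\alpha$ is a filling of the Young diagram of $\alpha$ (left-justified rows, row $i$ having $\alpha_i$ boxes) such that the first box of each row is empty and the remaining entries of each row are nonnegative integers strictly increasing from left to right; $\Lambda(\alpha,r)$ is the set of labeled tableaux of shape $\alpha$ all of whose entries are less than $r$. For $\lambda\in\Lambda(\alpha,r)$, $\mathrm{sign}(\lambda)=(-1)^{|\alpha|-\ell(\alpha)}$. A lattice sequence of width $m$ and height $h$ is a sequence of integers $(L_0,L_1,\dots,L_{m+1})$ with $0=L_0\le L_1\le\dots\le L_{m+1}=h$; $\mathcal{L}(m,h)$ denotes the set of these. A labeled lattice sequence of type $(k,n,r)$ is a pair $(\lambda,L)$ with $\lambda\in\Lambda(\alpha,r)$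 for some $\alpha\in\mathcal{C}(k,r)$ and $L\in\mathcal{L}(rk+n+1+\ell(\alpha),\,k-|\alpha|)$. *)

(* Defs.v *)
From mathcomp Require Import all_boot all_order all_algebra.
Set Implicit Arguments. Unset Strict Implicit. Unset Printing Implicit Defensive.
Import GRing.Theory Num.Theory.

(* A composition is a seq nat of positive parts; |alpha| = sumn alpha,
   l(alpha) = size alpha. *)
Definition composition (alpha : seq nat) : bool := all (fun a => 0 < a) alpha.

Definition in_c (m r : nat) (alpha : seq nat) : bool :=
  [&& composition alpha, all (fun a => 2 <= a <= r.+1) alpha & sumn alpha == m].

Definition in_C (k r : nat) (alpha : seq nat) : bool :=
  [exists m : 'I_k.+1, in_c m r alpha].

(* A labeled tableau is represented by the list of its rows, each row being
   the list of entries in its non-first boxes (the first box of each row is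
   empty). Row i thus has (size row_i).+1 boxes. *)
Definition tableau := seq (seq nat).

Definition shape (lam : tableau) : seq nat := map (fun row => (size row).+1) lam.

Definition in_Lambda (alpha : seq nat) (r : nat) (lam : tableau) : bool :=
  (shape lam == alpha) &&
  all (fun row => sorted ltn row && all (fun x => x < r) row) lam.

Definition sign (lam : tableau) : int :=
  (-1) ^+ (sumn (shape lam) - size (shape lam)).

Definition lattice_seq (m h : nat) (L : seq nat) : bool :=
  [&& size L == m.+2, nth 0 L 0 == 0, nth 0 L m.+1 == h & sorted leq L].

Definition is_LLS (k n r : nat) (x : tableau * seq nat) : bool :=
  let: (lam, L) := x in
  (* lam in Lambda(alpha, r) forces alpha = shape lam *)
  (in_C k r (shape lam) && in_Lambda (shape lam) r lam &&
   lattice_seq (r * k + n + 1 + size (shape lam)) (k - sumn (shape lam)) L).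

Definition wt (x : tableau * seq nat) : int := sign x.1.

Definition enumerates_LLS (k n r : nat) (s : seq (tableau * seq nat)) : Prop :=
  uniq s /\ forall x, x \in s = is_LLS k n r x.

(* Main.v *)
Require Import Defs.
From mathcomp Require Import all_boot all_order all_algebra.
From mathcomp Require Import zify ring.
Import GRing.Theory Num.Theory.

Fixpoint LLP (lo d : nat) : seq (seq nat) :=
  if d is d'.+1 then [seq lo :: s | s <- LLP lo.+1 d'] ++ LLP lo.+1 d' else [:: [::]].

Lemma ll_memP d lo s : (s \in LLP lo d) = sorted ltn s && all (fun x => lo <= x < lo + d) s.
Proof.
elim: d lo s => [|d IH] lo s.
  rewrite /= mem_seq1; case: s => //= x s.
  rewrite addn0 (_ : (lo <= x < lo) = false) ?andbF //; apply/negbTE/negP; lia.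
rewrite [LLP _ _]/= mem_cat IH; apply/idP/idP.
  case/orP.
    case/mapP=> t; rewrite IH => /andP[st at_] ->.
    rewrite /= leqnn /=.
    have ->: path ltn lo t.
      by case: t st at_ => //= y t -> /andP[/andP[-> _] _].
    rewrite /=; have -> : lo < lo + d.+1 by lia.
    rewrite /=; apply/allP=> y /(allP at_) /andP[a b]; apply/andP; split; lia.
  case/andP=> st at_; rewrite st /=; apply/allP=> y /(allP at_) /andP[a b].
  apply/andP; split; lia.
case/andP=> st at_; case: s st at_ => [|x t] st at_.
  by rewrite orbT.
case: (eqVneq x lo) => [xlo|ne].
  subst x.
  apply/orP; left; apply/mapP; exists t => //; rewrite IH.
  have st' := st; move: st'; rewrite /= => /path_sorted ->.
  have := order_path_min ltn_trans st => /= /allP mn.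
  apply/allP=> y yt; move: (mn y yt) => a.
  move: at_ => /= /andP[_ /allP /(_ y yt) /andP[_ b]]; apply/andP; split; lia.
apply/orP; right; apply/andP; split=> //; apply/allP=> y yin.
move: (allP at_ y yin) => /andP[a b].
have: x <= y.
  move: yin; rewrite inE => /orP[/eqP->//|yt].
  by have := order_path_min ltn_trans st => /allP /(_ y yt) /ltnW.
move: (allP at_ x (mem_head _ _)) => /andP[c _].
move=> xy; apply/andP; split; [|lia].
have : x != lo by []. lia.
Qed.

Lemma ll_uniqP d lo : uniq (LLP lo d).
Proof.
elim: d lo => [|d IH] lo //=.
rewrite cat_uniq IH andbT map_inj_uniq; last by move=> a b [].
rewrite IH /=; apply/hasPn => t; rewrite ll_memP => /andP[_ at_].
apply/mapP => -[u _ tu]; move: at_; rewrite tu /= => /andP[/andP[] ]; lia.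
Qed.

Lemma ll_sumP (R : nmodType) d lo (F : nat -> R) :
  (\sum_(s <- LLP lo d) F (size s) = \sum_(j < d.+1) F j *+ 'C(d, j))%R.
Proof.
elim: d lo F => [|d IH] lo F.
  by rewrite /= big_seq1 big_ord_recl big_ord0 addr0.
rewrite [LLP _ _]/= big_cat big_map /= (IH _ (fun j => F j.+1)) IH.
have hB : (\sum_(j < d.+1) F j *+ 'C(d, j) =
     F 0%N + \sum_(j < d.+1) F j.+1 *+ 'C(d, j.+1))%R.
  rewrite big_ord_recl [in RHS]big_ord_recr /= (bin_small (ltnSn d)) mulr0n addr0 bin0 mulr1n.
  by congr (_ + _)%R.
rewrite hB [in RHS]big_ord_recl /= bin0 mulr1n.
rewrite (addrC (F 0%N)) addrA addrC; congr (_ + _)%R.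
rewrite -big_split /=; apply: eq_bigr => i _; rewrite /bump /= binS mulrnDr.
by rewrite addrC.
Qed.


Fixpoint LLW (lo h m : nat) : seq (seq nat) :=
  if m is m'.+1 then [seq x :: s | x <- iota lo (h.+1 - lo), s <- LLW x h m'] else [:: [::]].

Lemma ll_memW m lo h s :
  (s \in LLW lo h m) = [&& size s == m, path leq lo s & all (fun y => y <= h) s].
Proof.
elim: m lo s => [|m IH] lo s.
  by rewrite /= mem_seq1; case: s.
apply/allpairsPdep/idP.
  case=> x [t [xin tin ->]]; move: xin tin; rewrite mem_iota IH.
  case/andP=> a b /and3P[/eqP c d e] /=; rewrite c eqxx a d e /=; apply/andP; split=> //; lia.
case: s => [|x t] //= /and4P[sz /andP[a b] c d].
exists x, t; split=> //; first by rewrite mem_iota; apply/andP; split; lia.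
by rewrite IH; apply/and3P; split.
Qed.

Lemma ll_uniqW m lo h : uniq (LLW lo h m).
Proof.
elim: m lo => [|m IH] lo //=.
apply: allpairs_uniq_dep; first exact: iota_uniq.
  by move=> x _; exact: IH.
move=> [x1 t1] [x2 t2] _ _ /= [e1 e2]; subst x2 t2; by [].
Qed.

Lemma ll_sizeW m lo h : lo <= h -> size (LLW lo h m) = 'C(m + (h - lo), m).
Proof.
elim: m lo => [|m IH] lo hlo; first by rewrite bin0.
rewrite [LLW _ _ _]/= size_allpairs_dep.
suff H : forall d lo, lo + d = h.+1 ->
   sumn [seq size (LLW x h m) | x <- iota lo d] = 'C(m + d, m.+1).
  rewrite (H (h.+1 - lo)); last by lia.
  by have -> : m + (h.+1 - lo) = m.+1 + (h - lo) by lia.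
elim=> [|d IHd] lo' e /=; first by rewrite addn0 bin_small.
rewrite IHd; last by lia.
rewrite IH; last by lia.
have -> : h - lo' = d by lia.
by rewrite addnS binS addnC.
Qed.

Definition ll_lats m h := [seq 0 :: rcons M h | M <- LLW 0 h m].

Lemma ll_path_all_le x s h : path leq x s -> last x s <= h -> all (fun y => y <= h) (x :: s).
Proof.
elim: s x => [|y s IH] x /=; first by move=> _ ->.
case/andP=> xy ps l; have := IH y ps l => /= /andP[yh ->].
by rewrite (leq_trans xy yh) yh.
Qed.

Lemma ll_memlats m h L : (L \in ll_lats m h) = lattice_seq m h L.
Proof.
rewrite /lattice_seq; apply/mapP/idP.
  case=> M; rewrite ll_memW => /and3P[/eqP sz pM aM] ->.
  rewrite /= size_rcons sz eqxx nth_rcons sz ltnn !eqxx /= rcons_path pM /=.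
  case: M {sz} pM aM => [|a M] //= _ aM.
  have aM' : all (fun y => y <= h) (a :: M) := aM.
  by apply: (allP aM' (last a M) (mem_last a M)).
case: L => [|a0 L']; first by case/and4P.
case/lastP: L' => [|M b] /and4P[].
  by rewrite eqSS.
rewrite /= size_rcons !eqSS => /eqP sz /eqP e0; rewrite nth_rcons sz ltnn eqxx => /eqP bh.
subst a0 b; rewrite /= rcons_path => /andP[pM lM].
exists M => //; rewrite ll_memW sz eqxx pM /=.
by case/andP: (ll_path_all_le _ _ _ pM lM).
Qed.

Lemma ll_uniqlats m h : uniq (ll_lats m h).
Proof.
rewrite map_inj_uniq ?ll_uniqW // => M1 M2 [] /rcons_inj [].
by [].
Qed.

Lemma ll_sizelats m h : size (ll_lats m h) = 'C(m + h, m).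
Proof. by rewrite size_map ll_sizeW // subn0. Qed.

Local Open Scope ring_scope.

Lemma ll_L1 r B m : \sum_(j < m.+1) (-1)^+j * ('C(r, j) * 'C(B + r + (m - j), m - j))%:Z
   = ('C(B + m, m))%:Z.
Proof.
elim: r B m => [|r IH] B m.
  rewrite big_ord_recl /= bin0 mul1n expr0 mul1r addn0 subn0 big1 ?addr0 // => j _.
  by rewrite /bump /= bin0n /= mul0n mulr0.
case: m => [|m].
  by rewrite big_ord_recl big_ord0 /= addr0 expr0 mul1r !bin0.
have IH1 := IH B.+1 m.+1; have IH2 := IH B.+1 m.
rewrite big_ord_recl /= in IH1; rewrite big_ord_recl /=.
rewrite (eq_bigr (fun j : 'I_m.+1 =>
   (-1) ^+ j.+1 * ('C(r, j.+1) * 'C(B.+1 + r + (m - j), m - j))%:Z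
   - (-1) ^+ j * ('C(r, j) * 'C(B.+1 + r + (m - j), m - j))%:Z)); last first.
  move=> j _; rewrite /bump /= binS subSS.
  rewrite add1n; have -> : (B + r.+1 + (m - j) = B.+1 + r + (m - j))%N by lia.
  by rewrite mulnDl PoszD mulrDr; congr (_ + _); rewrite exprS mulN1r mulNr.
rewrite sumrB IH2.
move: IH1; rewrite bin0 mul1n expr0 mul1r.
rewrite (eq_bigr (fun j : 'I_m.+1 =>
   (-1) ^+ j.+1 * ('C(r, j.+1) * 'C(B.+1 + r + (m - j), m - j))%:Z)); last first.
  by move=> j _; rewrite /bump /= subSS.
have -> : (B.+1 + r + m.+1 = B + r.+1 + m.+1)%N by lia.
move=> IH1; rewrite mul1r bin0 mul1n !subn0 addrA; rewrite !subn0 in IH1; rewrite IH1.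
have -> : (B.+1 + m.+1 = (B + m.+1).+1)%N by lia.
have -> : (B.+1 + m = B + m.+1)%N by lia.
by rewrite binS PoszD addrK.
Qed.

Definition ll_Ssum r h t := (\sum_(0 <= i < h.+1) 'C(t + r.+1 * i, i))%N.

Lemma ll_S0 r t : ll_Ssum r 0 t = 1%N.
Proof. by rewrite /ll_Ssum big_nat1 muln0 addn0 bin0. Qed.

Lemma ll_SS r h t : ll_Ssum r h.+1 t = (ll_Ssum r h t + 'C(t + r.+1 * h.+1, h.+1))%N.
Proof. by rewrite /ll_Ssum big_nat_recr. Qed.

Lemma ll_L2 r H u : (ll_Ssum r H u)%:Z =
  \sum_(j < H.+1) (-1)^+j * ('C(r, j) * ll_Ssum r (H - j) (u + r * j.+1))%:Z.
Proof.
elim: H => [|H IH].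
  by rewrite big_ord_recl big_ord0 /= sub0n !ll_S0 bin0 muln1 expr0 mul1r addr0.
rewrite ll_SS PoszD IH [in RHS]big_ord_recr /= subnn ll_S0 muln1.
have L := ll_L1 r (u + r * H.+1) H.+1.
rewrite big_ord_recr /= subnn addn0 bin0 muln1 in L.
rewrite (_ : (u + r * H.+1 + H.+1 = u + r.+1 * H.+1)%N) in L; last by nia.
rewrite -L addrA -big_split /=; congr (_ + _); apply: eq_bigr => j _.
have jH : (j <= H)%N by rewrite -ltnS.
rewrite -mulrDr -PoszD -mulnDr subSn // ll_SS.
move: (nat_of_ord j) jH => jj jH {IH L}.
have [k ->] : exists k, H = (jj + k)%N by exists (H - jj)%N; lia.
rewrite addKn.
have -> : (u + r * jj.+1 + r.+1 * k.+1 = u + r * (jj + k).+1 + r + k.+1)%N by nia.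
done.
Qed.

Lemma ll_SP r H t : (ll_Ssum r H.+1 t + ll_Ssum r H (t + r.+1) = ll_Ssum r H.+1 t.+1)%N.
Proof.
elim: H => [|H IH].
  rewrite !ll_SS !ll_S0 !bin1; lia.
rewrite (ll_SS r H.+1 t) (ll_SS r H (t + r.+1)) (ll_SS r H.+1 t.+1) -IH.
have -> : (t.+1 + r.+1 * H.+2 = (t + r.+1 * H.+2).+1)%N by lia.
rewrite binS.
have -> : (t + r.+1 + r.+1 * H.+1 = t + r.+1 * H.+2)%N by nia.
lia.
Qed.

Lemma ll_widen0 (G : nat -> int) n N : (n <= N)%N -> (forall j, (n <= j < N)%N -> G j = 0) ->
  \sum_(j < n) G j = \sum_(j < N) G j.
Proof.
move=> nN HG; rewrite (big_ord_widen N G nN) big_mkcond; apply: eq_bigr => j _.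
by case: ifP => // /negbT; rewrite -leqNgt => jn; rewrite HG // jn ltn_ord.
Qed.

Lemma ll_binC a b : 'C(a + b, a) = 'C(a + b, b).
Proof. by rewrite -{2}(addnK b a) bin_sub ?leq_addl. Qed.

Lemma ll_L3 r h t :
  (ll_Ssum r h t)%:Z = ('C(t.+1 + r * h + h, t.+1 + r * h))%:Z +
   \sum_(j < r.+1) (if (0 < j)%N && (j.+1 <= h)%N then
        (-1)^+j * (ll_Ssum r (h - j.+1) (t + 1 + r * j.+1))%:Z else 0) *+ 'C(r, j).
Proof.
case: h => [|H].
  rewrite ll_S0 muln0 !addn0 binn big1 ?addr0 // => j _.
  by rewrite andbF mul0rn.
have e1 := ll_SP r H t; rewrite (ll_SS r H t.+1) in e1.
have e2 : (ll_Ssum r H.+1 t)%:Z = ('C(t.+1 + r.+1 * H.+1, H.+1))%:Z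
    + (ll_Ssum r H t.+1)%:Z - (ll_Ssum r H (t + r.+1))%:Z.
  lia.
rewrite e2 ll_L2 big_ord_recl /= subn0 expr0 mul1r bin0 mul1n.
have -> : (t.+1 + r * 1 = t + r.+1)%N by nia.
rewrite (addrC (Posz (ll_Ssum r H (t + r.+1)))) addrA addrK.
rewrite ll_binC.
have -> : (t.+1 + r * H.+1 + H.+1 = t.+1 + r.+1 * H.+1)%N by nia.
congr (_ + _).
pose G j := if (0 < j)%N && (j <= H)%N then
   (-1)^+j * ('C(r, j) * ll_Ssum r (H - j) (t.+1 + r * j.+1))%:Z else 0.
transitivity (\sum_(j < H.+1) G j).
  rewrite big_ord_recl /G /= add0r; apply: eq_bigr => i _; rewrite /bump /=.
  by rewrite ltn_ord.
rewrite (@ll_widen0 G H.+1 (r + H).+1); [|lia|]; last first.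
  move=> j /andP[a b]; rewrite /G; case: ifP => // /andP[_ c]; lia.
symmetry.
rewrite -(@ll_widen0 G r.+1 (r + H).+1); [|lia|]; last first.
  move=> j /andP[a b]; rewrite /G; case: ifP => // /andP[_ c].
  by rewrite bin_small // mul0n mulr0.
apply: eq_bigr => j _; rewrite /G ltnS; case: ifP => _; last by rewrite mul0rn.
rewrite subSS addn1 -mulr_natr PoszM; ring.
Qed.

Local Close Scope ring_scope.


Definition ll_goodrow r (s : seq nat) := sorted ltn s && all (fun x => x < r) s.
Definition ll_rowok r (s : seq nat) := (0 < size s <= r) && ll_goodrow r s.

Lemma ll_goodrow_size r s : ll_goodrow r s -> size s <= r.
Proof.
case/andP; rewrite ltn_sorted_uniq_leq => /andP[u _] a.
rewrite -(size_iota 0 r); apply: uniq_leq_size => // x /(allP a) xr.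
by rewrite mem_iota.
Qed.

Lemma ll_memP0 r s : (s \in LLP 0 r) = ll_goodrow r s.
Proof. by rewrite ll_memP /ll_goodrow; congr (_ && _); apply: eq_all => x. Qed.

Fixpoint LLE (r f h w : nat) : seq (tableau * seq nat) :=
  [seq ([::], L) | L <- ll_lats w h] ++
  if f is f'.+1 then
   [seq (s :: x.1, x.2) | s <- [seq s <- LLP 0 r | (0 < size s) && ((size s).+1 <= h)],
                          x <- LLE r f' (h - (size s).+1) w.+1]
  else [::].

Definition ll_goodX r h w (x : tableau * seq nat) : bool :=
  let: (lam, L) := x in
  [&& all (ll_rowok r) lam, sumn (Defs.shape lam) <= h &
      lattice_seq (w + size lam) (h - sumn (Defs.shape lam)) L].

Lemma ll_inj_nil : injective (fun L : seq nat => (([::] : tableau), L)).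
Proof. by move=> a b []. Qed.

Lemma ll_E_S r f h w : LLE r f.+1 h w = [seq ([::], L) | L <- ll_lats w h] ++
   [seq (s :: x.1, x.2) | s <- [seq s <- LLP 0 r | (0 < size s) && ((size s).+1 <= h)],
                          x <- LLE r f (h - (size s).+1) w.+1].
Proof. by []. Qed.

Lemma ll_memE r f h w x : h <= f -> (x \in LLE r f h w) = ll_goodX r h w x.
Proof.
elim: f h w x => [|f IH] h w [lam L] hf.
  rewrite /LLE cats0; case: lam => [|s lam].
    rewrite (mem_map ll_inj_nil).
    by rewrite ll_memlats /ll_goodX /= addn0 subn0.
  rewrite (_ : _ \in _ = false); last by apply/negbTE/negP => /mapP[? _ []].
  by rewrite /ll_goodX /=; apply/esym/negbTE/negP => /and3P[_ c _]; lia.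
rewrite ll_E_S mem_cat; case: lam => [|s lam].
  rewrite (mem_map ll_inj_nil).
  rewrite ll_memlats /ll_goodX /= addn0 subn0.
  case: (lattice_seq w h L) => //=; apply/negbTE/negP.
  by case/allpairsPdep => s [x [_ _ []]].
have -> : ((s :: lam, L) \in [seq ([::], L0) | L0 <- ll_lats w h]) = false.
  by apply/negbTE/negP => /mapP[L0 _ []].
rewrite /=; apply/allpairsPdep/idP.
  case=> s0 [[lam0 L0] [s0in xin [e1 e2 e3]]]; subst s0 lam0 L0.
  move: s0in; rewrite mem_filter ll_memP0 => /andP[/andP[sz sh] gr].
  rewrite IH in xin; last by lia.
  move: xin => /and3P[al sl lat].
  rewrite /ll_goodX /= /ll_rowok sz gr (ll_goodrow_size _ _ gr) al /=.
  apply/andP; split; first by lia.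
  have -> : w + (size lam).+1 = w.+1 + size lam by lia.
  by have -> : h - ((size s).+1 + sumn (Defs.shape lam)) = h - (size s).+1 - sumn (Defs.shape lam) by lia.
rewrite /ll_goodX /= => /and3P[/andP[/andP[sz gr] al] sl lat].
exists s, (lam, L); split=> //.
  rewrite mem_filter ll_memP0 gr andbT; apply/andP; split; [by case/andP: sz | lia].
rewrite IH; last by lia.
rewrite /ll_goodX al /=; apply/andP; split; first by lia.
have -> : w.+1 + size lam = w + (size lam).+1 by lia.
by have -> : h - (size s).+1 - sumn (Defs.shape lam) = h - ((size s).+1 + sumn (Defs.shape lam)) by lia.
Qed.

Lemma ll_uniqE r f h w : uniq (LLE r f h w).
Proof.
elim: f h w => [|f IH] h w.
  by rewrite /LLE cats0 map_inj_uniq ?ll_uniqlats //; exact: ll_inj_nil.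
rewrite ll_E_S cat_uniq map_inj_uniq ?ll_uniqlats; last exact: ll_inj_nil.
apply/and3P; split => //.
  apply/hasPn => x /allpairsPdep [s [y [_ _ ->]]]; apply/negP => /mapP[? _ [] //].
apply: (@allpairs_uniq_dep _ (fun _ => _) _ (fun s x => (s :: x.1, x.2))).
- by rewrite filter_uniq // ll_uniqP.
- by move=> s _; exact: IH.
- move=> [s1 [l1 ll_L1]] [s2 [l2 ll_L2]] _ _ /= [e1 e2 e3]; subst; by [].
Qed.

Lemma ll_shape_sum (lam : tableau) :
  sumn (Defs.shape lam) = sumn (map size lam) + size lam.
Proof. by elim: lam => //= s lam ->; lia. Qed.


Local Open Scope ring_scope.
Lemma ll_sign_nil : Defs.sign [::] = 1.
Proof. by []. Qed.

Lemma ll_sign_cons s lam : Defs.sign (s :: lam) = (-1) ^+ (size s) * Defs.sign lam.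
Proof.
rewrite /Defs.sign !size_map !ll_shape_sum !addnK /= -exprD; congr (_ ^+ _).
Qed.

Lemma ll_sum1 (T : Type) (s : seq T) : \sum_(x <- s) (1 : int) = (size s)%:Z.
Proof. by elim: s => [|x s IH]; rewrite ?big_nil ?big_cons ?IH // add1n. Qed.

Lemma ll_sumE r f h w t : (h <= f)%N -> w = (t.+1 + r * h)%N ->
  \sum_(x <- LLE r f h w) Defs.sign x.1 = (ll_Ssum r h t)%:Z.
Proof.
elim: f h w t => [|f IH] h w t hf ->.
  have -> : h = 0%N by lia.
  by rewrite /LLE cats0 big_map ll_sum1 ll_sizelats muln0 !addn0 binn ll_S0.
rewrite ll_E_S big_cat big_map ll_sum1 ll_sizelats ll_L3; congr (_ + _).
rewrite big_allpairs_dep /= big_filter big_mkcond /=.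
rewrite -(ll_sumP _ r 0 (fun j => if (0 < j)%N && (j.+1 <= h)%N then
        (-1)^+j * (ll_Ssum r (h - j.+1) (t + 1 + r * j.+1))%:Z else 0)).
apply: eq_bigr => s _; case: ifP => // /andP[a b].
under eq_bigr do rewrite ll_sign_cons.
rewrite -mulr_sumr (IH _ _ (t + 1 + r * (size s).+1)%N); [|lia|].
  by [].
move: (size s) a b => j a b.
have [k ->] : exists k, h = (j.+1 + k)%N by exists (h - j.+1)%N; lia.
rewrite addKn; nia.
Qed.

Local Close Scope ring_scope.


Lemma ll_goodX_LLS k n r x : ll_goodX r k (r * k + n + 1) x = is_LLS k n r x.
Proof.
case: x => lam L; rewrite /ll_goodX /is_LLS size_map.
have -> : in_Lambda (Defs.shape lam) r lam = all (ll_goodrow r) lam by rewrite /in_Lambda eqxx.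
have -> : in_C k r (Defs.shape lam) =
    all (fun s => 0 < size s <= r) lam && (sumn (Defs.shape lam) <= k).
  apply/existsP/andP.
    case=> m /and3P[_ a /eqP e]; split; last by rewrite e -ltnS ltn_ord.
    by rewrite all_map in a.
  case=> a b; have b' : sumn (Defs.shape lam) < k.+1 by rewrite ltnS.
  exists (Ordinal b'); rewrite /in_c /composition !all_map a eqxx andbT /=.
  by rewrite andbT; apply/allP.
have -> : all (ll_rowok r) lam = all (fun s => 0 < size s <= r) lam && all (ll_goodrow r) lam.
  by rewrite -all_predI.
by case: (all _ lam); case: (all (ll_goodrow r) lam); case: (sumn _ <= k).
Qed.

Local Open Scope ring_scope.

Theorem theorem3p1 (k n r : nat) :
  (exists s : seq (tableau * seq nat), enumerates_LLS k n r s) /\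
  (forall s : seq (tableau * seq nat), enumerates_LLS k n r s ->
     \sum_(x <- s) wt x = (\sum_(0 <= i < k.+1) 'C((r.+1) * i + n, i))%:R).
Proof.
have key : forall x, (x \in LLE r k k (r * k + n + 1)%N) = is_LLS k n r x.
  by move=> x; rewrite ll_memE // ll_goodX_LLS.
split; first by exists (LLE r k k (r * k + n + 1)%N); split; [exact: ll_uniqE | exact: key].
move=> s [us ms].
have pe : perm_eq s (LLE r k k (r * k + n + 1)%N).
  by apply: uniq_perm => //; [exact: ll_uniqE | move=> x; rewrite ms key].
rewrite (perm_big _ pe) /=.
rewrite (ll_sumE r k k _ n) //; last by nia.
rewrite natz /ll_Ssum; congr Posz; apply: eq_bigr => i _; by rewrite addnC.
Qed.
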